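(* In the setting of $n=2^q$ identical fermions injected in the input state $(1+nc,\dots,n+nc)$ ($0\le c\le 2^k-1$) of the Sylvester interferometer $\frac{1}{\sqrt m}H(m)$ with $m=2^{k+q}$, the number of non-suppressed output states is exactly $(m/n)^n=2^{kn}$, out of $\binom{m+n-1}{n}$ possible $n$-particle output states.
   Context: For $m=2^p$, the Sylvester matrix $H(m)$ is defined recursively by $H(1)=[1]$ and $H(2^p)=\begin{bmatrix}H(2^{p-1})&H(2^{p-1})\\ H(2^{p-1})&-H(2^{p-1})\end{bmatrix}$, rows and columns indexed $1,\dots,m$. An $n$-particle output state on $m$ modes is a nondecreasing tuple $\vec t=(t_1\le\dots\le t_n)$ with $t_i\in\{1,\dots,m\}$; $\mu_k(\vec t)=|\{i:t_i=k\}|$. For input $\vec s$ and output $\vec t$, the scattering matrix is $S_{i,j}=U_{t_i,s_j}$ with $U=\frac{1}{\sqrt m}H(m)$, and the fermionic amplitude is $\det S/\sqrt{\prod_k\mu_k(\vec s)!\prod_k\mu_k(\vec t)!}$. An output state is suppressed if its amplitude is zero. *)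

(* Defs.v *)
(* Modes are 0-indexed: mode j (1..m in the paper) is the ordinal j-1 : 'I_m. *)
From HB Require Import structures.
From mathcomp Require Import all_boot all_order all_algebra all_field.
Set Implicit Arguments. Unset Strict Implicit. Unset Printing Implicit Defensive.
Import Order.TTheory GRing.Theory Num.Theory.

(* Entries (0-indexed) of the Sylvester matrix H(2^p), following the recursive
   block definition H(2^(p+1)) = [[H, H], [H, -H]] with H = H(2^p). *)
Fixpoint sylv (p : nat) (i j : nat) : int :=
  match p with
  | 0 => 1%R
  | p'.+1 =>
      let h := 2 ^ p' in
      if i < h then (if j < h then sylv p' i j else sylv p' i (j - h))
      else (if j < h then sylv p' (i - h) j else (- sylv p' (i - h) (j - h))%R)
  end.

Definition sylvester (p : nat) : 'M[int]_(2 ^ p) := \matrix_(i, j) sylv p i j.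

Local Open Scope ring_scope.

Definition sylvU (p : nat) : 'M[algC]_(2 ^ p) :=
  (sqrtC (2 ^ p)%:R)^-1 *: \matrix_(i, j) ((sylvester p i j)%:~R : algC).

Definition output_state (p n : nat) (t : n.-tuple 'I_(2 ^ p)) : bool :=
  sorted (fun a b : 'I_(2 ^ p) => (a <= b)%N) t.

Definition occ (p n : nat) (t : n.-tuple 'I_(2 ^ p)) (k : 'I_(2 ^ p)) : nat :=
  count_mem k t.

Definition scattering (p n : nat) (s t : n.-tuple 'I_(2 ^ p)) : 'M[algC]_n :=
  \matrix_(i, j) sylvU p (tnth t i) (tnth s j).

Definition fermion_amplitude (p n : nat) (s t : n.-tuple 'I_(2 ^ p)) : algC :=
  \det (scattering s t) /
    sqrtC (((\prod_(k : 'I_(2 ^ p)) (occ s k)`!) * (\prod_(k : 'I_(2 ^ p)) (occ t k)`!))%N%:R).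

Definition suppressed (p n : nat) (s t : n.-tuple 'I_(2 ^ p)) : bool :=
  fermion_amplitude s t == 0.

Lemma pow2_gt0 (p : nat) : (0 < 2 ^ p)%N.
Proof. by rewrite expn_gt0. Qed.

(* Input state (1+nc, ..., n+nc) with n = 2^q on m = 2^(k+q) modes, 0-indexed as
   (nc, ..., nc + n - 1).  The insubd default is never used when c < 2^k. *)
Definition input_state (q k c : nat) : (2 ^ q).-tuple 'I_(2 ^ (k + q)) :=
  [tuple insubd (Ordinal (pow2_gt0 (k + q))) (2 ^ q * c + i)%N | i < 2 ^ q].

(* Main.v *)
Require Import Defs.
From HB Require Import structures.
From mathcomp Require Import all_boot all_order all_algebra all_field.
From mathcomp Require Import zify.
Set Implicit Arguments. Unset Strict Implicit. Unset Printing Implicit Defensive.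
Import Order.TTheory GRing.Theory Num.Theory.

Lemma sylvS p i j : sylv p.+1 i j =
  if (i < 2 ^ p)%N then (if (j < 2 ^ p)%N then sylv p i j else sylv p i (j - 2 ^ p))
  else (if (j < 2 ^ p)%N then sylv p (i - 2 ^ p) j else (- sylv p (i - 2 ^ p) (j - 2 ^ p))%R).
Proof. by []. Qed.

Lemma sylv_sq p i j : (sylv p i j * sylv p i j = 1)%R.
Proof.
elim: p i j => [|p IH] i j /=; first by [].
by case: ifP => _; case: ifP => _; rewrite ?mulrNN IH.
Qed.

Lemma mul_lt_aux a b M N : (b < N)%N -> (a * N + b < M * N)%N = (a < M)%N.
Proof.
move=> bN; apply/idP/idP => H.
  rewrite ltnNge; apply/negP => Ma.
  have : (M * N <= a * N)%N by rewrite leq_mul2r Ma orbT.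
  lia.
have : (a.+1 * N <= M * N)%N by rewrite leq_mul2r H orbT.
rewrite mulSn; lia.
Qed.

Lemma sylv_prod k q a b c d : (a < 2 ^ k)%N -> (c < 2 ^ k)%N -> (b < 2 ^ q)%N -> (d < 2 ^ q)%N ->
  sylv (k + q) (a * 2 ^ q + b) (c * 2 ^ q + d) = (sylv k a c * sylv q b d)%R.
Proof.
move=> + + bq dq; elim: k a c => [|k IH] a c.
  by rewrite expn0 !ltnS !leqn0 => /eqP-> /eqP->; rewrite /= mul1r.
move=> aB cB; rewrite addSn !sylvS expnD !mul_lt_aux //.
have E : forall x, (2 ^ k <= x)%N -> (x * 2 ^ q + b - 2 ^ k * 2 ^ q = (x - 2^k) * 2 ^ q + b)%N.
  move=> x hx; rewrite mulnBl; have : (2^k * 2^q <= x * 2^q)%N by rewrite leq_mul2r hx orbT. lia.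
have E' : forall x, (2 ^ k <= x)%N -> (x * 2 ^ q + d - 2 ^ k * 2 ^ q = (x - 2^k) * 2 ^ q + d)%N.
  move=> x hx; rewrite mulnBl; have : (2^k * 2^q <= x * 2^q)%N by rewrite leq_mul2r hx orbT. lia.
rewrite expnS in aB cB.
case: ltnP => ha; case: ltnP => hc; rewrite ?E ?E' // IH //; try lia.

Qed.

Definition red p a := if (a < 2 ^ p)%N then a else (a - 2 ^ p)%N.
Definition sg p a : int := if (a < 2 ^ p)%N then 1%R else (-1)%R.

Lemma sylv_lo p a j : (j < 2 ^ p)%N -> sylv p.+1 a j = sylv p (red p a) j.
Proof. by move=> hj; rewrite sylvS hj /red; case: ifP. Qed.

Lemma sylv_hi p a j : sylv p.+1 a (j + 2 ^ p)%N = (sg p a * sylv p (red p a) j)%R.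
Proof.
have H : (j + 2 ^ p < 2 ^ p)%N = false by rewrite ltnNge leq_addl.
rewrite sylvS H addnK /red /sg.
by case: ifP => _; rewrite ?mul1r ?mulN1r.
Qed.

Lemma shift_sum (F : nat -> int) h :
  (\sum_(h <= j < h + h) F j = \sum_(0 <= j < h) F (j + h)%N)%R.
Proof. by rewrite -{1}(add0n h) big_addn addnK. Qed.

Lemma sylv_orth p a b : (a < 2 ^ p)%N -> (b < 2 ^ p)%N ->
  (\sum_(j < 2 ^ p) sylv p a j * sylv p b j = if a == b then (2 ^ p)%:R else 0)%R.
Proof.
elim: p a b => [|p IH] a b.
  rewrite expn0 !ltnS !leqn0 => /eqP-> /eqP->; by rewrite big_ord1.
move=> ha hb.
rewrite -(big_mkord xpredT (fun j => sylv p.+1 a j * sylv p.+1 b j)%R) expnS mul2n -addnn (big_cat_nat (leq0n (2 ^ p)) (leq_addr (2 ^ p) (2 ^ p))).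
rewrite shift_sum.
have E1 : (\sum_(0 <= j < 2 ^ p) sylv p.+1 a j * sylv p.+1 b j =
   \sum_(j < 2 ^ p) sylv p (red p a) j * sylv p (red p b) j)%R.
  rewrite -(big_mkord xpredT (fun j => sylv p (red p a) j * sylv p (red p b) j)%R).
  by apply: eq_big_nat => j /andP [_ hj]; rewrite !sylv_lo.
have E2 : (\sum_(0 <= j < 2 ^ p) sylv p.+1 a (j + 2 ^ p)%N * sylv p.+1 b (j + 2 ^ p)%N =
   sg p a * sg p b * \sum_(j < 2 ^ p) sylv p (red p a) j * sylv p (red p b) j)%R.
  rewrite -(big_mkord xpredT (fun j => sylv p (red p a) j * sylv p (red p b) j)%R) mulr_sumr.
  by apply: eq_bigr => j _; rewrite !sylv_hi mulrACA.
rewrite E1 E2 IH; last 2 first.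
- by move: ha; rewrite /red expnS; case: ifP => //; lia.
- by move: hb; rewrite /red expnS; case: ifP => //; lia.
rewrite /red /sg /=; rewrite expnS in ha hb.
case: (ltnP a (2 ^ p)) => ha1; case: (ltnP b (2 ^ p)) => hb1.
- by case: eqP => _; rewrite mul1r ?natrD // addr0.
- have -> : (a == b)%N = false by apply/negbTE; lia.
  by rewrite mul1r mulN1r subrr.
- have -> : (a == b)%N = false by apply/negbTE; lia.
  by rewrite mulr1 mulN1r subrr.
- have -> : (a - 2 ^ p == b - 2 ^ p)%N = (a == b) by apply/eqP/eqP; lia.
  by rewrite mulrNN mulr1 mul1r; case: eqP => _; rewrite ?natrD // addr0.
Qed.

Lemma uniq_inj (T : eqType) n (t : n.-tuple T) (f : T -> nat) :
  uniq (map f t) = injectiveb (fun i => f (tnth t i)).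
Proof.
apply/(tuple_uniqP (map_tuple f t))/injectiveP => H i j e; apply: H.
  by rewrite !tnth_map.
by move: e; rewrite !tnth_map.
Qed.

Lemma sylv_neq0 p i j : sylv p i j != 0%R.
Proof. by apply/eqP => e; have := sylv_sq p i j; rewrite e mul0r. Qed.

Lemma detA_neq0 q n (r : 'I_n -> nat) : (forall i, r i < 2 ^ q) -> n = 2 ^ q ->
  (\det (\matrix_(i < n, j < n) ((sylv q (r i) j)%:~R : algC)) != 0)%R = injectiveb r.
Proof.
move=> hr hn; set A := (\matrix_(i, j) _)%R.
have [inj|ninj] := boolP (injectiveb r); rewrite ?(negbTE ninj) ?inj.
  move/injectiveP: inj => inj.
  have E : (A *m A^T = ((2 ^ q)%:R : algC)%:M)%R.
    apply/matrixP => i i'; rewrite !mxE.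
    under eq_bigr => j _ do rewrite !mxE -intrM.
    rewrite -rmorph_sum /=.
    have -> : (\sum_(j < n) sylv q (r i) j * sylv q (r i') j =
               \sum_(j < 2 ^ q) sylv q (r i) j * sylv q (r i') j)%R.
      by case: _ / hn.
    rewrite sylv_orth //.
    have -> : (r i == r i') = (i == i') by apply/eqP/eqP => [/inj|->].
    by case: (i == i'); rewrite ?mulr1n ?mulr0n // rmorph_nat.
  have := congr1 determinant E; rewrite det_mulmx det_tr det_scalar => D.
  apply/negP => /eqP Z; move: D; rewrite Z mul0r => /esym/eqP.
  by rewrite expf_eq0 pnatr_eq0 expn_eq0 andbF.
move/injectivePn: ninj => [i [i' ne e]].
apply/negbTE; rewrite negbK; apply/eqP; apply: (determinant_alternate ne) => j.
by rewrite !mxE e.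
Qed.

Lemma nonsupp q k c (t : (2 ^ q).-tuple 'I_(2 ^ (k + q))) : c < 2 ^ k ->
  ~~ suppressed (input_state q k c) t =
  uniq (map (fun x : 'I_(2 ^ (k + q)) => (x %% 2 ^ q)%N) t).
Proof.
move=> hc.
have key : forall (x : 'I_(2 ^ (k + q))) (j : 'I_(2 ^ q)),
    sylv (k + q) x (2 ^ q * c + j) = (sylv k (x %/ 2 ^ q) c * sylv q (x %% 2 ^ q) j)%R.
  move=> x j; rewrite {1}(divn_eq x (2 ^ q)) [(2 ^ q * c)%N]mulnC sylv_prod //.
  - by rewrite ltn_divLR ?expn_gt0 // -expnD.
  - by rewrite ltn_pmod ?expn_gt0.
have P : forall (f : 'I_(2 ^ (k + q)) -> nat), (\prod_k (f k)`! != 0)%N.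
  by move=> f; rewrite -lt0n prodn_gt0 // => i; exact: fact_gt0.
rewrite /suppressed /fermion_amplitude mulf_eq0 negb_or invr_eq0 sqrtC_eq0 pnatr_eq0.
rewrite muln_eq0 negb_or !P andbT.
pose alpha : algC := ((sqrtC (2 ^ (k + q))%:R)^-1)%R.
pose d := (\row_i (alpha * (sylv k (tnth t i %/ 2 ^ q) c)%:~R))%R.
pose A := (\matrix_(i < 2 ^ q, j < 2 ^ q) ((sylv q (tnth t i %% 2 ^ q) j)%:~R : algC))%R.
have hS : scattering (input_state q k c) t = (diag_mx d *m A)%R.
  apply/matrixP => i j; rewrite mul_diag_mx !mxE tnth_mktuple val_insubd.
  have -> : (2 ^ q * c + j < 2 ^ (k + q))%N.
    have : (c.+1 * 2 ^ q <= 2 ^ k * 2 ^ q)%N by rewrite leq_mul2r hc orbT.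
    rewrite expnD mulSn => H; have := ltn_ord j; lia.
  by rewrite key intrM mulrA.
rewrite hS det_mulmx det_diag mulf_eq0 negb_or.
have -> : (\prod_i d 0 i != 0)%R.
  apply/prodf_neq0 => i _; rewrite mxE mulf_neq0 // ?intr_eq0 ?sylv_neq0 //.
  by rewrite invr_eq0 sqrtC_eq0 pnatr_eq0 expn_eq0.
rewrite /= detA_neq0 //; last by move=> i; rewrite ltn_pmod ?expn_gt0.
by rewrite andbT (uniq_inj t (fun x : 'I_(2 ^ (k + q)) => (x %% 2 ^ q)%N)).
Qed.


Definition leO m := fun a b : 'I_m => (a <= b)%N.

Lemma leO_total (m : nat) : total (@leO m).
Proof. by move=> a b; rewrite /leO leq_total. Qed.
Lemma leO_trans (m : nat) : transitive (@leO m).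
Proof. by move=> a b c; rewrite /leO; apply: leq_trans. Qed.
Lemma leO_anti (m : nat) : antisymmetric (@leO m).
Proof. by move=> a b /andP [h1 h2]; apply: val_inj; apply/eqP; rewrite eqn_leq; apply/andP. Qed.

Lemma eg_lt n K m (hm : m = K * n) (a : 'I_K) (r : 'I_n) : a * n + r < m.
Proof. by rewrite hm mul_lt_aux. Qed.

Definition eg n K m (hm : m = K * n) (g : {ffun 'I_n -> 'I_K}) (r : 'I_n) : 'I_m :=
  Ordinal (eg_lt hm (g r) r).

Lemma eg_mod n K m (hm : m = K * n) g r : (eg hm g r) %% n = r.
Proof. by rewrite /= modnMDl modn_small. Qed.

Lemma eg_div n K m (hm : m = K * n) g r : (eg hm g r) %/ n = g r.
Proof.
have np : 0 < n by apply: leq_ltn_trans (ltn_ord r).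
by rewrite /= divnMDl // divn_small // addn0.
Qed.

Lemma sizeG n K m (hm : m = K * n) g :
  size (sort (@leO m) (map (eg hm g) (enum 'I_n))) == n.
Proof. by rewrite size_sort size_map size_enum_ord. Qed.

Definition Gt n K m (hm : m = K * n) g : n.-tuple 'I_m := Tuple (sizeG hm g).

Lemma countB n K m (hm : m = K * n) (np : 0 < n) :
  #|[set t : n.-tuple 'I_m | sorted (@leO m) t && uniq (map (fun x : 'I_m => (x %% n)%N) t)]|
  = K ^ n.
Proof.
have Ginj : injective (Gt hm).
  move=> g1 g2 /(congr1 val) /= E.
  apply/ffunP => r.
  have : eg hm g1 r \in sort (@leO m) (map (eg hm g2) (enum 'I_n)).
    by rewrite -E mem_sort map_f ?mem_enum.
  rewrite mem_sort => /mapP [r' _ e].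
  have rr : r = r'.
    by apply: ord_inj; rewrite -(eg_mod hm g1 r) -(eg_mod hm g2 r') e.
  subst r'; apply: ord_inj; by rewrite -(eg_div hm g1 r) -(eg_div hm g2 r) e.
rewrite -[K]card_ord -[X in _ ^ X]card_ord -card_ffun -cardsT -(card_imset _ Ginj).
apply: eq_card => t; rewrite inE; apply/idP/imsetP.
  case/andP => st ut.
  pose f := fun i => Ordinal (ltn_pmod (tnth t i) np).
  have finj : injective f.
    move: ut; rewrite (uniq_inj t) => /injectiveP fi i j /(congr1 val) /= e.
    exact: fi.
  have hdiv : forall r, tnth t (invF finj r) %/ n < K.
    by move=> r; rewrite ltn_divLR // -hm.
  pose g := [ffun r => Ordinal (hdiv r)].
  have key : forall r, eg hm g r = tnth t (invF finj r).
    move=> r; apply: ord_inj => /=; rewrite ffunE /=.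
    set i := invF finj r.
    have fi : f i = r := f_invF finj r.
    by rewrite -[in X in _ + X]fi /= -divn_eq.
  exists g; first by rewrite inE.
  apply: val_inj => /=; symmetry.
  apply: (sorted_eq (@leO_trans m) (@leO_anti m)) => //.
    exact: sort_sorted (@leO_total m) _.
  rewrite perm_sort; apply: uniq_perm.
  - rewrite map_inj_uniq ?enum_uniq // => r1 r2 e.
    by apply: ord_inj; rewrite -(eg_mod hm g r1) e eg_mod.
  - exact: map_uniq ut.
  move=> x; apply/mapP/idP.
    by case=> r _ ->; rewrite key mem_tnth.
  case/tnthP => i ->; exists (f i); first by rewrite mem_enum.
  by rewrite key invF_f.
move=> [g _ ->]; apply/andP; split.
  exact: sort_sorted (@leO_total m) _.
set S := map (eg hm g) (enum 'I_n).
have P1 : perm_eq (map (fun x : 'I_m => (x %% n)%N) (sort (@leO m) S))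
                  (map (fun x : 'I_m => (x %% n)%N) S).
  exact: perm_map (introT permPl (perm_sort _ _)).
rewrite /= (perm_uniq P1) /S -map_comp.
rewrite (eq_map (g := fun r : 'I_n => (r : nat))).
  by rewrite map_inj_uniq ?enum_uniq //; exact: ord_inj.
by move=> r /=; rewrite (eg_mod hm g r).
Qed.

Lemma card_out n N : 0 < N ->
  #|[set t : n.-tuple 'I_N | sorted (@leO N) t]| = 'C(N + n - 1, n).
Proof.
case: N => // N _.
rewrite addSn subn1 /= addnC -(card_sorted_tuples n N).
by apply: eq_card => t; rewrite !inE sorted_map.
Qed.


Theorem mainTheorem13 (q k c : nat) :
  (c < 2 ^ k)%N ->
  #|[set t : (2 ^ q).-tuple 'I_(2 ^ (k + q)) |
       output_state t && ~~ suppressed (input_state q k c) t]|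
    = (2 ^ (k + q) %/ 2 ^ q) ^ (2 ^ q)
  /\ (2 ^ (k + q) %/ 2 ^ q) ^ (2 ^ q) = 2 ^ (k * 2 ^ q)
  /\ #|[set t : (2 ^ q).-tuple 'I_(2 ^ (k + q)) | output_state t]|
       = 'C(2 ^ (k + q) + 2 ^ q - 1, 2 ^ q).
Proof.
move=> hc.
have hdiv : 2 ^ (k + q) %/ 2 ^ q = 2 ^ k by rewrite expnD mulnK ?expn_gt0.
have hm : 2 ^ (k + q) = 2 ^ k * 2 ^ q by rewrite expnD.
split; last split.
- rewrite hdiv -(countB hm (expn_gt0 2 q)).
  by apply: eq_card => t; rewrite !inE nonsupp.
- by rewrite hdiv -expnM.
- rewrite -card_out ?expn_gt0 //.
Qed.
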